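(* Let $(X,d)$ be a bounded metric space and let $M: X\to\mathbb{R}$ satisfy $d(x,y)\le M(x)\le d(x,z)+M(z)$ for all $x,y,z\in X$. Let $d_S$ be the subset distance on $\mathcal{F}(X)$ defined in the context. Then for any $X_1,X_2\in\mathcal{F}(X)$, $d_S(X_1,X_2)=d_S(X_1\setminus X_2,\,X_2\setminus X_1)$.
   Context: $\mathcal{F}(X)$ denotes the set of all finite subsets of $X$ (including the empty set). For $A,B\in\mathcal{F}(X)$ with $|A|\le|B|$ and an injection $\chi:A\to B$, define $d_\chi(A,B)=\sum_{x\in A} d(x,\chi(x))+\sum_{y\in B\setminus\chi(A)} M(y)$. The subset distance is $d_S(A,B)=d_S(B,A)=\min\{d_\chi(A,B) : \chi:A\to B \text{ an injection}\}$ (for $|A|\le|B|$). *)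

(* Defs.v *)
From HB Require Import structures.
From mathcomp Require Import all_boot all_order all_algebra finmap.
From mathcomp Require Import reals constructive_ereal.
Set Implicit Arguments. Unset Strict Implicit. Unset Printing Implicit Defensive.
Import Order.TTheory GRing.Theory Num.Theory.
Local Open Scope ring_scope.


Definition is_metric (R : realType) (X : Type) (d : X -> X -> R) : Prop :=
  [/\ forall x y, 0 <= d x y,
      forall x y, d x y = 0 <-> x = y,
      forall x y, d x y = d y x &
      forall x y z, d x z <= d x y + d y z].

Definition bounded_metric (R : realType) (X : Type) (d : X -> X -> R) : Prop :=
  exists K : R, forall x y, d x y <= K.

(* d_chi(A,B) for an injection chi : A -> B (elements of the finite sets A, B
   are the members of the finite subtypes of X they induce). *)
Definition d_chi (R : realType) (X : choiceType) (d : X -> X -> R) (M : X -> R)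
    (A B : {fset X}) (chi : {ffun A -> B}) : R :=
  \sum_(x : A) d (val x) (val (chi x)) + \sum_(y : B | y \notin codom chi) M (val y).

(* min over all injections chi : A -> B (+oo if there is none, i.e. #|A| > #|B|). *)
Definition d_S_le (R : realType) (X : choiceType) (d : X -> X -> R) (M : X -> R)
    (A B : {fset X}) : \bar R :=
  \big[Order.min/+oo%E]_(chi : {ffun A -> B} | injectiveb chi) (d_chi d M chi)%:E.

Definition d_S (R : realType) (X : choiceType) (d : X -> X -> R) (M : X -> R)
    (A B : {fset X}) : \bar R :=
  if (#|` A|%fset <= #|` B|%fset)%N then d_S_le d M A B else d_S_le d M B A.

(* Main.v *)
Require Import Defs.
From HB Require Import structures.
From mathcomp Require Import all_boot all_order all_algebra finmap.
From mathcomp Require Import reals constructive_ereal.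
From mathcomp Require Import lra.
Import Order.TTheory GRing.Theory Num.Theory.
Local Open Scope ring_scope.
Set Implicit Arguments. Unset Strict Implicit.

Lemma sum_diff1 (R : realType) (X : eqType) (s : seq X) c (F G : X -> R) :
  uniq s -> c \in s -> (forall x, x \in s -> x != c -> F x = G x) ->
  \sum_(x <- s) F x = \sum_(x <- s) G x + (F c - G c).
Proof.
move=> us cs FG.
have e1 : \sum_(i <- s) F i = F c + \sum_(i <- s | i != c) F i by rewrite (bigD1_seq c).
have e2 : \sum_(i <- s) G i = G c + \sum_(i <- s | i != c) G i by rewrite (bigD1_seq c).
rewrite e1 e2.
have -> : \sum_(i <- s | i != c) F i = \sum_(i <- s | i != c) G i.
  by rewrite big_seq_cond [RHS]big_seq_cond; apply: eq_bigr => x /andP[xs xc]; apply: FG.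
lra.
Qed.

Lemma sum_diff2 (R : realType) (X : eqType) (s : seq X) c p (F G : X -> R) :
  uniq s -> c \in s -> p \in s -> c != p ->
  (forall x, x \in s -> x != c -> x != p -> F x = G x) ->
  \sum_(x <- s) F x = \sum_(x <- s) G x + (F c - G c) + (F p - G p).
Proof.
move=> us cs ps cp FG.
pose H x := if x == c then F c else G x.
have HG : H c = F c by rewrite /H eqxx.
have Hp : H p = G p by rewrite /H eq_sym (negbTE cp).
rewrite (@sum_diff1 _ _ s p F H) //; last first.
  by move=> x xs xp; rewrite /H; case: eqP => [->//|/eqP xc]; apply: FG.
rewrite (@sum_diff1 _ _ s c H G) //; last first.
  by move=> x xs /negbTE xc; rewrite /H xc.
rewrite HG Hp; lra.
Qed.

Local Open Scope fset_scope.

Definition img (X : choiceType) (P : {fset X}) (f : X -> X) (y : X) : bool :=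
  has (fun x => f x == y) P.
Definition cost (R : realType) (X : choiceType) (d : X -> X -> R) (M : X -> R)
  (P Q : {fset X}) (f : X -> X) : R :=
  \sum_(x <- P) d x (f x) + \sum_(y <- Q | ~~ img P f y) M y.
Definition valid (X : choiceType) (P Q : {fset X}) (f : X -> X) :=
  {in P, forall x, f x \in Q} /\ {in P &, injective f}.

Lemma chi_to_f (R : realType) (X : choiceType) (d : X -> X -> R) (M : X -> R)
  (P Q : {fset X}) (chi : {ffun P -> Q}) : injectiveb chi ->
  exists f, valid P Q f /\ cost d M P Q f = d_chi d M chi.
Proof.
move=> /injectiveP chiI.
pose f x := if insub x is Some p then val (chi p) else x.
have fE : forall p : P, f (val p) = val (chi p) by move=> p; rewrite /f valK.
exists f; split.
  split; first by move=> x xP; rewrite -[x]/(val [` xP]) fE fsvalP.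
  move=> x y xP yP; rewrite -[x]/(val [` xP]) -[y]/(val [` yP]) !fE.
  by move=> /val_inj /chiI ->.
rewrite /cost /d_chi !big_seq_fsetE /=; congr (_ + _)%R.
  by apply: eq_bigr => p _; rewrite fE.
apply: eq_bigl => y; congr negb; apply/hasP/codomP.
  move=> [x xP /eqP]; rewrite -[x]/(val [` xP]) fE => /val_inj <-.
  by exists [` xP].
move=> [x ->]; exists (val x); first exact: fsvalP.
by rewrite fE.
Qed.

Lemma f_to_chi (R : realType) (X : choiceType) (d : X -> X -> R) (M : X -> R)
  (P Q : {fset X}) f : valid P Q f ->
  exists chi : {ffun P -> Q}, injectiveb chi /\ d_chi d M chi = cost d M P Q f.
Proof.
move=> [fPQ fI].
pose chi := [ffun a : P => [` fPQ (val a) (fsvalP a)] : Q].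
have chiE : forall a, val (chi a) = f (val a) by move=> a; rewrite ffunE.
exists chi; split.
  apply/injectiveP => a b /(congr1 val); rewrite !chiE => /fI.
  by move=> h; apply: val_inj; apply: h; apply: fsvalP.
rewrite /cost /d_chi !big_seq_fsetE /=; congr (_ + _)%R.
  by apply: eq_bigr => p _; rewrite chiE.
apply: eq_bigl => y; congr negb; apply/codomP/hasP.
  move=> [x ->]; exists (val x); first exact: fsvalP.
  by rewrite chiE.
move=> [x xP /eqP]; rewrite -[x]/(val [` xP]) -chiE => /val_inj <-.
by exists [` xP].
Qed.

Lemma cost_eq_in (R : realType) (X : choiceType) (d : X -> X -> R) (M : X -> R)
  (P Q : {fset X}) f g : {in P, f =1 g} -> cost d M P Q f = cost d M P Q g.
Proof.
move=> fg; rewrite /cost; congr (_ + _)%R.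
  by rewrite big_seq [RHS]big_seq; apply: eq_bigr => x xP; rewrite fg.
apply: eq_bigl => y; congr negb; apply: eq_in_has => x xP /=; by rewrite fg.
Qed.

Lemma restrict (R : realType) (X : choiceType) (d : X -> X -> R) (M : X -> R)
  (P Q : {fset X}) g : (forall x, d x x = 0) ->
  (forall x, x \in P -> x \in Q -> g x = x) -> valid P Q g ->
  valid (P `\` Q) (Q `\` P) g /\ cost d M P Q g = cost d M (P `\` Q) (Q `\` P) g.
Proof.
move=> d0 gfix [gPQ gI]; split.
  split.
    move=> x; rewrite !inE => /andP[xQ xP]; rewrite gPQ // andbT.
    apply/negP => gxP.
    have : g (g x) = g x by apply: gfix => //; apply: gPQ.
    by move/gI => e; move: xQ; rewrite -e ?gPQ //; apply: gPQ.
  by move=> x y; rewrite !inE => /andP[_ xP] /andP[_ yP]; apply: gI.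
rewrite /cost; congr (_ + _)%R.
  rewrite (bigID (fun x => x \in Q)) /= big1_fset ?add0r; last first.
    by move=> x xP xQ; rewrite gfix.
  rewrite big_fset_condE; apply: congr_big => //; congr enum_fset; apply/fsetP => x.
  by rewrite !inE andbC.
rewrite big_fset_condE [RHS]big_fset_condE; apply: congr_big => //; congr enum_fset.
apply/fsetP => y; rewrite !inE.
case yQ: (y \in Q) => /=; last by rewrite andbF.
rewrite andbT; apply/idP/idP.
  move=> h; have yP : y \notin P.
    apply/negP => yP; move: h; apply/negP; rewrite negbK; apply/hasP.
    by exists y => //; rewrite gfix.
  rewrite yP /=; apply: contra h => /hasP[x]; rewrite inE => /andP[_ xP] e.
  by apply/hasP; exists x.
case/andP => yP h; apply: contra h => /hasP[x xP /eqP gx]; apply/hasP; exists x; last by apply/eqP.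
by rewrite inE xP andbT; apply/negP => xQ; move: yP; rewrite -gx gfix // xP.
Qed.

Lemma extend (R : realType) (X : choiceType) (d : X -> X -> R) (M : X -> R)
  (P Q : {fset X}) g : (forall x, d x x = 0) -> valid (P `\` Q) (Q `\` P) g ->
  exists g', valid P Q g' /\ cost d M P Q g' = cost d M (P `\` Q) (Q `\` P) g.
Proof.
move=> d0 [gAB gI].
pose g' x := if x \in Q then x else g x.
have gA : forall x, x \in P -> x \notin Q -> g x \in Q `\` P.
  by move=> x xP xQ; apply: gAB; rewrite inE xP xQ.
have vg' : valid P Q g'.
  split.
    move=> x xP; rewrite /g'; case: ifP => // /negbT xQ.
    by move: (gA x xP xQ); rewrite inE => /andP[].
  move=> x y xP yP; rewrite /g'.
  case: ifP => xQ; case: ifP => yQ // e;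
   [ by move: (gA y yP (negbT yQ)); rewrite -e inE xP
   | by move: (gA x xP (negbT xQ)); rewrite e inE yP
   | by apply: gI e; rewrite inE ?xQ ?yQ ?xP ?yP ].
have gfix : forall x, x \in P -> x \in Q -> g' x = x by move=> x _ xQ; rewrite /g' xQ.
exists g'; split => //; have [_ ->] := restrict M d0 gfix vg'.
by apply: cost_eq_in => x; rewrite inE /g' => /andP[/negbTE -> _].
Qed.

Local Close Scope fset_scope.
Lemma step (R : realType) (X : choiceType) (d : X -> X -> R) (M : X -> R)
  (P Q : {fset X}) g c :
  (forall x y, d x y = d y x) -> (forall x y z, d x z <= d x y + d y z) ->
  (forall x, d x x = 0) -> (forall x z, M x <= d x z + M z) ->
  valid P Q g -> c \in P -> c \in Q -> g c != c ->
  exists g', [/\ valid P Q g', cost d M P Q g' <= cost d M P Q g, g' c = c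
     & forall x, x \in P -> g x = x -> g' x = x].
Proof.
move=> dsym dtri d0 hMt [gPQ gI] cP cQ gcc.
have uP := fset_uniq P; have uQ := fset_uniq Q.
case: (boolP (img P g c)) => [/hasP[p pP /eqP gpc] | nimg].
  have pc : p != c by apply/eqP => e; rewrite -e gpc e eqxx in gcc.
  pose tau x := if x == c then p else if x == p then c else x.
  have tauc : tau c = p by rewrite /tau eqxx.
  have taup : tau p = c by rewrite /tau (negbTE pc) eqxx.
  have tauo : forall x, x != c -> x != p -> tau x = x.
    by move=> x xc xp; rewrite /tau (negbTE xc) (negbTE xp).
  have tauK : forall x, tau (tau x) = x.
    move=> x; case: (eqVneq x c) => [->|xc]; first by rewrite tauc taup.
    case: (eqVneq x p) => [->|xp]; first by rewrite taup tauc.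
    by rewrite !tauo.
  have tauP : forall x, x \in P -> tau x \in P.
    by move=> x xP; rewrite /tau; case: ifP => _ //; case: ifP.
  pose g' x := g (tau x).
  exists g'; split.
  - split; first by move=> x xP; apply: gPQ; apply: tauP.
    move=> x y xP yP /(gI _ _ (tauP _ xP) (tauP _ yP)) e.
    by rewrite -(tauK x) e tauK.
  - have himg : forall y, img P g' y = img P g y.
      move=> y; apply/hasP/hasP => [[x xP e]|[x xP e]]; exists (tau x);
        rewrite ?tauP // /g' ?tauK //.
    rewrite /cost.
    have -> : \sum_(y <- Q | ~~ img P g' y) M y = \sum_(y <- Q | ~~ img P g y) M y.
      by apply: eq_bigl => y; rewrite himg.
    have cp : c != p by rewrite eq_sym.
    rewrite (@sum_diff2 _ _ P c p (fun x => d x (g' x)) (fun x => d x (g x))) //; last first.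
      by move=> x _ xc xp; rewrite /g' tauo.
    rewrite /g' tauc taup gpc d0.
    have := dtri p c (g c); lra.
  - by rewrite /g' tauc.
  - move=> x xP gx.
    have xc : x != c by apply/eqP => e; rewrite e in gx; rewrite gx eqxx in gcc.
    have xp : x != p by apply/eqP => e; rewrite e gpc in gx; rewrite gx eqxx in pc.
    by rewrite /g' tauo.
pose q := g c.
have qQ : q \in Q := gPQ c cP.
have cq : c != q by rewrite eq_sym.
pose g' x := if x == c then c else g x.
have g'c : g' c = c by rewrite /g' eqxx.
have g'o : forall x, x != c -> g' x = g x by move=> x /negbTE xc; rewrite /g' xc.
exists g'; split.
- split.
    by move=> x xP; rewrite /g'; case: ifP => _; [exact: cQ | exact: gPQ].
  move=> x y xP yP; case: (eqVneq x c) => [->|xc]; case: (eqVneq y c) => [->|yc] //.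
  + rewrite g'c g'o // => e; move/negP: nimg; case; apply/hasP; exists y => //.
    by rewrite -e.
  + rewrite g'c g'o // => e; move/negP: nimg; case; apply/hasP; exists x => //.
    by rewrite e.
  + by rewrite !g'o //; apply: gI.
- have himg : forall y, y != c -> y != q -> img P g' y = img P g y.
    move=> y yc yq; apply/hasP/hasP => [[x xP /eqP e]|[x xP /eqP e]]; exists x => //.
      case: (eqVneq x c) => [xc|xc]; first by rewrite xc g'c in e; rewrite e eqxx in yc.
      by rewrite -g'o // e.
    case: (eqVneq x c) => [xc|xc]; first by rewrite xc in e; rewrite -e eqxx in yq.
    by rewrite g'o // e.
  have i1 : img P g' c by apply/hasP; exists c => //; rewrite g'c.
  have i2 : ~~ img P g' q.
    apply/hasP => -[x xP /eqP]; case: (eqVneq x c) => [->|xc].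
      by rewrite g'c => e; rewrite e eqxx in cq.
    by rewrite g'o // => /(gI _ _ xP cP) e; rewrite e eqxx in xc.
  have i3 : img P g q by apply/hasP; exists c.
  have e1 : \sum_(y <- Q | ~~ img P g' y) M y = \sum_(y <- Q) (if ~~ img P g' y then M y else 0).
    by rewrite big_mkcond.
  have e2 : \sum_(y <- Q | ~~ img P g y) M y = \sum_(y <- Q) (if ~~ img P g y then M y else 0).
    by rewrite big_mkcond.
  rewrite /cost e1 e2.
  rewrite (@sum_diff1 _ _ P c (fun x => d x (g' x)) (fun x => d x (g x))) //; last first.
    by move=> x _ xc; rewrite g'o.
  rewrite (@sum_diff2 _ _ Q c q (fun y => if ~~ img P g' y then M y else 0)
     (fun y => if ~~ img P g y then M y else 0)) //; last first.
    by move=> y _ yc yq; rewrite himg.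
  rewrite /= i1 (negbTE nimg) (negbTE i2) i3 g'c d0 /=.
  have := hMt q c; rewrite dsym; lra.
- exact: g'c.
- move=> x xP gx; rewrite g'o ?gx //; apply/eqP => e; rewrite e in gx; by rewrite gx eqxx in gcc.
Qed.

Lemma count_le_in (T : eqType) (s : seq T) (a b : pred T) :
  (forall x, x \in s -> a x -> b x) -> (count a s <= count b s)%N.
Proof.
elim: s => //= y s IH H; apply: leq_add.
  by case ay: (a y) => //; rewrite (H y) ?mem_head.
by apply: IH => x xs; apply: H; rewrite inE xs orbT.
Qed.

Lemma count_lt (T : eqType) (s : seq T) (a b : pred T) c :
  (forall x, x \in s -> a x -> b x) -> c \in s -> b c -> ~~ a c ->
  (count a s < count b s)%N.
Proof.
elim: s => // y s IH H; rewrite inE => /orP[/eqP ->|cs] bc nac /=.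
  rewrite (negbTE nac) bc add0n add1n ltnS; apply: count_le_in => x xs.
  by apply: H; rewrite inE xs orbT.
rewrite -addnS; apply: leq_add.
  by case ay: (a y) => //; rewrite (H y) ?mem_head.
by apply: IH => // x xs; apply: H; rewrite inE xs orbT.
Qed.

Lemma improve (R : realType) (X : choiceType) (d : X -> X -> R) (M : X -> R)
  (P Q : {fset X}) :
  (forall x y, d x y = d y x) -> (forall x y z, d x z <= d x y + d y z) ->
  (forall x, d x x = 0) -> (forall x z, M x <= d x z + M z) ->
  forall n g, (count (fun x => (x \in Q) && (g x != x)) P < n)%N -> valid P Q g ->
  exists h, [/\ valid P Q h, forall x, x \in P -> x \in Q -> h x = x
     & cost d M P Q h <= cost d M P Q g].
Proof.
move=> dsym dtri d0 hMt; elim => [|n IH] g //= hn vg.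
case: (boolP (has (fun x => (x \in Q) && (g x != x)) P)) =>
   [/hasP[c cP /andP[cQ gcc]] | hn0].
  have [g' [vg' le' g'c fixp]] := step dsym dtri d0 hMt vg cP cQ gcc.
  have lt : (count (fun x => (x \in Q) && (g' x != x)) P <
             count (fun x => (x \in Q) && (g x != x)) P)%N.
    apply: (count_lt (c := c)) => //; last by rewrite g'c eqxx andbF.
    - move=> x xP /andP[xQ gx]; rewrite xQ /=; apply: contra gx => /eqP gxx.
      by rewrite (fixp x xP gxx).
    - by rewrite cQ.
  have [h [vh hfix leh]] := IH g' (leq_trans lt hn) vg'.
  by exists h; split => //; apply: le_trans leh le'.
exists g; split => //.
move/hasPn: hn0 => H x xP xQ; have := H x xP; rewrite xQ /= negbK => /eqP.
by [].
Qed.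

Lemma main_le (R : realType) (X : choiceType) (d : X -> X -> R) (M : X -> R)
  (P Q : {fset X}) :
  (forall x y, d x y = d y x) -> (forall x y z, d x z <= d x y + d y z) ->
  (forall x, d x x = 0) -> (forall x z, M x <= d x z + M z) ->
  d_S_le d M P Q = d_S_le d M (P `\` Q)%fset (Q `\` P)%fset.
Proof.
move=> dsym dtri d0 hMt.
apply/le_anti/andP; split.
  rewrite /d_S_le; apply: le_bigmin => [|psi psiI]; first exact: leey.
  have [g [vg eg]] := chi_to_f d M psiI.
  have [g' [vg' eg']] := extend M d0 vg.
  have [chi [chiI echi]] := f_to_chi d M vg'.
  by apply: (bigmin_inf _ _ _ _ chiI); rewrite echi eg' eg.
rewrite /d_S_le; apply: le_bigmin => [|chi chiI]; first exact: leey.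
have [g [vg eg]] := chi_to_f d M chiI.
have [h [vh hfix leh]] := improve dsym dtri d0 hMt (ltnSn _) vg.
have [vh' eh] := restrict M d0 hfix vh.
have [psi [psiI epsi]] := f_to_chi d M vh'.
by apply: (bigmin_inf _ _ _ _ psiI); rewrite epsi -eh -eg lee_fin.
Qed.

Unset Implicit Arguments.
Theorem corollary2p2 (R : realType) (X : choiceType) (d : X -> X -> R) (M : X -> R)
  (hd : is_metric d) (hb : bounded_metric d)
  (hM : forall x y z : X, d x y <= M x /\ M x <= d x z + M z)
  (X1 X2 : {fset X}) :
  d_S d M X1 X2 = d_S d M (X1 `\` X2)%fset (X2 `\` X1)%fset.
Proof.
move: hd => [_ hd0 hsym htri].
have d0 : forall x, d x x = 0 by move=> x; apply/hd0.
have hMt : forall x z, M x <= d x z + M z by move=> x z; case: (hM x x z).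
rewrite /d_S.
have -> : (#|` (X1 `\` X2)%fset| <= #|` (X2 `\` X1)%fset|)%N = (#|` X1| <= #|` X2|)%N.
  by rewrite -(cardfsID X2 X1) -(cardfsID X1 X2) fsetIC leq_add2l.
by case: ifP => _; apply: main_le.
Qed.
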